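(* Let $\alpha\colon G\to\mathrm{Aut}(A)$ be a tracially amenable action of a discrete group $G$ on a unital C$^*$-algebra $A$ with $T(A)\neq\emptyset$. Then $G$ is amenable if and only if $A$ has a $G$-invariant tracial state.
   Context: $T(A)$ is the set of tracial states. For $\xi,\eta\in C_c(G,A)$ set $\langle\xi,\eta\rangle=\sum_g\xi(g)^*\eta(g)$, with $\ell^2(G,A)$ the completion and $\widetilde{\alpha}_g(\xi)(h)=\alpha_g(\xi(g^{-1}h))$; $\|x\|_{2,u}=\sup_{\tau\in T(A)}\tau(x^*x)^{1/2}$ for $x\in A$ and $\|\xi\|_{2,u}=\sup_\tau\tau(\langle\xi,\xi\rangle)^{1/2}$. The action is tracially amenable if for all finite $F\subseteq A$, $K\subseteq G$, $\varepsilon>0$ there is $\xi\in C_c(G,A)$ with $\|\xi\|\le1$, $\|\xi a-a\xi\|_{2,u}<\varepsilon$ ($a\in F$), $\|\langle\xi,\xi\rangle-1\|_{2,u}<\varepsilon$, $\|\widetilde\alpha_g(\xi)-\xi\|_{2,u}<\varepsilon$ ($g\in K$). *)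

(* Defs.v *)
From HB Require Import structures.
From mathcomp Require Import all_boot all_order all_algebra.
From mathcomp Require Import complex.
From mathcomp Require Import boolp classical_sets cardinality fsbigop reals.
Set Implicit Arguments. Unset Strict Implicit. Unset Printing Implicit Defensive.
Import Order.TTheory GRing.Theory Num.Theory.
Local Open Scope classical_set_scope.
Local Open Scope ring_scope.

Definition group_axioms (G : Type) (mul : G -> G -> G) (one : G) (inv : G -> G)
  : Prop :=
  [/\ forall x y z, mul x (mul y z) = mul (mul x y) z,
      forall x, mul one x = x, forall x, mul x one = x,
      forall x, mul (inv x) x = one & forall x, mul x (inv x) = one].

Definition bounded_fun (R : realType) (G : Type) (f : G -> R) : Prop :=
  exists M : R, forall x, `|f x| <= M.

Definition amenable_group (R : realType) (G : Type) (mul : G -> G -> G)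
  (inv : G -> G) : Prop :=
  exists m : (G -> R) -> R,
  [/\ forall f g, bounded_fun f -> bounded_fun g -> m (f \+ g) = m f + m g,
      forall (c : R) f, bounded_fun f -> m (fun x => c * f x) = c * m f,
      forall f, bounded_fun f -> (forall x, 0 <= f x) -> 0 <= m f,
      m (fun _ => 1) = 1 &
      forall f g, bounded_fun f -> m (fun h => f (mul (inv g) h)) = m f].

Section CStar.
Variables (R : realType) (A : algType R[i]) (star : A -> A) (nrm : A -> R).

Definition is_unital_Cstar : Prop :=
  [/\ [/\ forall x, star (star x) = x,
          forall x y, star (x + y) = star x + star y,
          forall (c : R[i]) x, star (c *: x) = c^* *: star x &
          forall x y, star (x * y) = star y * star x],
      [/\ forall x, 0 <= nrm x,
          forall x, nrm x = 0 -> x = 0,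
          forall x y, nrm (x + y) <= nrm x + nrm y,
          forall (c : R[i]) x, nrm (c *: x) = complex.Re (`|c|) * nrm x &
          forall x y, nrm (x * y) <= nrm x * nrm y],
      forall x, nrm (star x * x) = nrm x ^+ 2 &
      forall u : nat -> A,
        (forall e : R, 0 < e -> exists N, forall m n, (N <= m)%N -> (N <= n)%N ->
           nrm (u m - u n) < e) ->
        exists l, forall e : R, 0 < e -> exists N, forall n, (N <= n)%N ->
           nrm (u n - l) < e].

Definition tracial_state (tau : A -> R[i]) : Prop :=
  [/\ forall x y, tau (x + y) = tau x + tau y,
      forall (c : R[i]) x, tau (c *: x) = c * tau x,
      forall x, 0 <= tau (star x * x),
      tau 1 = 1 &
      forall x y, tau (x * y) = tau (y * x)].

Definition sup2u (y : A) : R :=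
  sup [set Num.sqrt (complex.Re (tau y)) | tau in [set tau | tracial_state tau]].

Definition norm2u (x : A) : R := sup2u (star x * x).

End CStar.

Section Action.
Variables (R : realType) (G : choiceType) (mul : G -> G -> G) (one : G)
  (inv : G -> G) (A : algType R[i]) (star : A -> A) (nrm : A -> R).

Definition is_action (alpha : G -> A -> A) : Prop :=
  [/\ (forall g x y, alpha g (x + y) = alpha g x + alpha g y) /\
      (forall g (c : R[i]) x, alpha g (c *: x) = c *: alpha g x),
      forall g x y, alpha g (x * y) = alpha g x * alpha g y,
      forall g, alpha g 1 = 1,
      forall g x, alpha g (star x) = star (alpha g x) &
      (forall x, alpha one x = x) /\
      (forall g h x, alpha (mul g h) x = alpha g (alpha h x))].

Definition compact_supp (xi : G -> A) : Prop := finite_set [set g | xi g != 0].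

Definition ip (xi eta : G -> A) : A :=
  \sum_(g \in [set: G]) (star (xi g) * eta g).

Definition ell2_norm (xi : G -> A) : R := Num.sqrt (nrm (ip xi xi)).

Definition norm2u_ell2 (xi : G -> A) : R := sup2u star (ip xi xi).

Definition talpha (alpha : G -> A -> A) (g : G) (xi : G -> A) : G -> A :=
  fun h => alpha g (xi (mul (inv g) h)).

Definition tracially_amenable (alpha : G -> A -> A) : Prop :=
  forall (F : seq A) (K : seq G) (eps : R), 0 < eps ->
  exists xi : G -> A,
  [/\ compact_supp xi,
      ell2_norm xi <= 1,
      forall a, a \in F -> norm2u_ell2 (fun g => xi g * a - a * xi g) < eps,
      norm2u star (ip xi xi - 1) < eps &
      forall g, g \in K -> norm2u_ell2 (fun h => talpha alpha g xi h - xi h) < eps].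

Definition invariant_tracial_state (alpha : G -> A -> A) : Prop :=
  exists tau : A -> R[i],
    tracial_state star tau /\ forall g x, tau (alpha g x) = tau x.

End Action.

(* Main.v *)
Require Import Defs.
From HB Require Import structures.
From mathcomp Require Import all_boot all_order all_algebra.
From mathcomp Require Import complex.
From mathcomp Require Import boolp classical_sets cardinality fsbigop reals.
From mathcomp Require Import finmap functions.
From mathcomp Require Import topology normedtype.
From mathcomp Require Import ring lra.
Set Implicit Arguments. Unset Strict Implicit. Unset Printing Implicit Defensive.
Import Order.TTheory GRing.Theory Num.Theory.
Import numFieldTopology.Exports numFieldNormedType.Exports.
Local Open Scope ring_scope.
Lemma geo_small (R : realType) (e : R) : 0 < e ->
  exists N, forall n, (N <= n)%N -> (2^-1 : R) ^+ n < e.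
Proof.
move=> e0.
have [N hN] : exists N : nat, e^-1 < N%:R.
  exists (Num.bound e^-1); apply: archi_boundP; rewrite invr_ge0 ltW //.
exists N => n hn.
have h2 : (0 : R) < 2 ^+ n by rewrite exprn_gt0.
rewrite exprVn -[_ < e]ltf_pV2 ?posrE ?invr_gt0 // invrK.
apply: (lt_le_trans hN).
rewrite -natrX ler_nat.
apply: (leq_trans hn); apply: ltnW; by apply: ltn_expl.
Qed.

Section CStarBasics.
Variables (R : realType) (A : algType R[i]) (star : A -> A) (nrm : A -> R).
Hypothesis HA : is_unital_Cstar star nrm.
Local Open Scope complex_scope.

Lemma starK x : star (star x) = x. Proof. by case: HA => [[h _ _ _] _ _ _]; apply: h. Qed.
Lemma starD x y : star (x + y) = star x + star y. Proof. by case: HA => [[_ h _ _] _ _ _]; apply: h. Qed.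
Lemma starZ c x : star (c *: x) = c^* *: star x. Proof. by case: HA => [[_ _ h _] _ _ _]; apply: h. Qed.
Lemma starM x y : star (x * y) = star y * star x. Proof. by case: HA => [[_ _ _ h] _ _ _]; apply: h. Qed.
Lemma nrm_ge0 x : 0 <= nrm x. Proof. by case: HA => _ [h _ _ _ _] _ _; apply: h. Qed.
Lemma nrm_eq0 x : nrm x = 0 -> x = 0. Proof. by case: HA => _ [_ h _ _ _] _ _; apply: h. Qed.
Lemma nrmD x y : nrm (x + y) <= nrm x + nrm y. Proof. by case: HA => _ [_ _ h _ _] _ _; apply: h. Qed.
Lemma nrmZ c x : nrm (c *: x) = complex.Re `|c| * nrm x. Proof. by case: HA => _ [_ _ _ h _] _ _; apply: h. Qed.
Lemma nrmM x y : nrm (x * y) <= nrm x * nrm y. Proof. by case: HA => _ [_ _ _ _ h] _ _; apply: h. Qed.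
Lemma nrmC x : nrm (star x * x) = nrm x ^+ 2. Proof. by case: HA => _ _ h _; apply: h. Qed.

Lemma ReNormR (t : R) : complex.Re `|t%:C| = `|t|.
Proof. by rewrite normc_def /= expr0n /= addr0 sqrtr_sqr. Qed.

Lemma nrmZR (t : R) x : nrm (t%:C *: x) = `|t| * nrm x.
Proof. by rewrite nrmZ ReNormR. Qed.

Lemma nrm0 : nrm 0 = 0.
Proof. by rewrite -(scale0r (0 : A)) -[0 : R[i]]/((0:R)%:C) nrmZR normr0 mul0r. Qed.

Lemma nrmN x : nrm (- x) = nrm x.
Proof.
have e : (-1 : R[i]) = (-1 : R)%:C by apply/eqP; rewrite eq_complex /= oppr0 !eqxx.
by rewrite -scaleN1r e nrmZR normrN normr1 mul1r.
Qed.

Lemma nrmBC x y : nrm (x - y) = nrm (y - x).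
Proof. by rewrite -nrmN opprB. Qed.

Lemma nrmB_le x y z : nrm (x - z) <= nrm (x - y) + nrm (y - z).
Proof. have -> : x - z = (x - y) + (y - z) by rewrite addrA subrK. exact: nrmD. Qed.

Lemma star0 : star 0 = 0.
Proof.
have h := starD 0 0; rewrite addr0 -{1}[star 0]addr0 in h.
by apply: (addrI (star 0)); rewrite -h.
Qed.

Lemma starN x : star (- x) = - star x.
Proof. by apply/eqP; rewrite -subr_eq0 opprK -starD addNr star0. Qed.

Lemma starB x y : star (x - y) = star x - star y.
Proof. by rewrite starD starN. Qed.

Lemma star1 : star 1 = 1.
Proof.
have := starM (star 1) 1; rewrite !(mulr1, starK) => h.
exact: (esym h).
Qed.

Lemma starZR (t : R) x : star (t%:C *: x) = t%:C *: star x.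
Proof. by rewrite starZ conj_Creal //; apply/complex_realP; exists t. Qed.

Lemma nrm_star x : nrm (star x) = nrm x.
Proof.
have key y : nrm y <= nrm (star y).
  have := nrmM (star y) y; rewrite nrmC expr2.
  have [->|yp] := eqVneq (nrm y) 0; first by rewrite nrm_ge0.
  move=> h; have y0 : 0 < nrm y by rewrite lt_def yp nrm_ge0.
  by rewrite -(ler_pM2r y0).
by apply/eqP; rewrite eq_le key andbT; have := key (star x); rewrite starK.
Qed.

Lemma nrm_small_eq0 x (K : R) : 0 < K ->
  (forall d : R, 0 < d -> d <= 1 -> nrm x <= K * d) -> x = 0.
Proof.
move=> K0 h; apply: nrm_eq0; apply/eqP; rewrite eq_le nrm_ge0 andbT.
rewrite leNgt; apply/negP => nx.
pose d := Num.min 1 (nrm x / (2 * K)).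
have d0 : 0 < d by rewrite /d lt_min ltr01 /= divr_gt0 // mulr_gt0.
have d1 : d <= 1 by rewrite /d ge_min lexx.
have := h d d0 d1.
have : d <= nrm x / (2 * K) by rewrite /d ge_min lexx orbT.
rewrite ler_pdivlMr ?mulr_gt0 // => h1 h2.
have Kd : 0 < K * d by rewrite mulr_gt0.
nra.
Qed.

End CStarBasics.

Definition half (R : realType) : R[i] := ((2:R)^-1)%:C%C.

Lemma two_half (R : realType) : (1 + 1) * half R = 1.
Proof.
apply/eqP; rewrite eq_complex /= addr0 !mul0r !mulr0 add0r subr0 eqxx andbT.
by rewrite -[1 + 1]/(2%:R : R) mulfV ?pnatr_eq0.
Qed.

Lemma half_half (R : realType) : half R + half R = 1.
Proof. by rewrite -[RHS](two_half R) mulrDl mul1r. Qed.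

Section Sqrt.
Variables (R : realType) (A : algType R[i]) (star : A -> A) (nrm : A -> R).
Hypothesis HA : is_unital_Cstar star nrm.

Fixpoint wseq (h : A) n : A :=
  if n is n'.+1 then half R *: (h + wseq h n' * wseq h n') else 0.

Lemma nrm_half x : nrm (half R *: x) = nrm x / 2.
Proof. by rewrite /half (nrmZR HA) ger0_norm ?invr_ge0 ?ler0n // mulrC. Qed.

Variable h : A.
Hypothesis hsa : star h = h.
Hypothesis hn : nrm h <= 2^-1.
Local Notation w := (wseq h).

Lemma w_bound n : nrm (w n) <= 2^-1.
Proof.
elim: n => [|n IH] /=; first by rewrite (nrm0 HA) invr_ge0 ler0n.
rewrite nrm_half.
have h1 := nrmD HA h (w n * w n).
have h2 := nrmM HA (w n) (w n).
have h3 := nrm_ge0 HA (w n).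
have h4 : nrm (w n) * nrm (w n) <= 2^-1 * 2^-1 by apply: ler_pM.
move: h1 h2 h4 hn. 
move: (nrm (h + w n * w n)) (nrm (w n * w n)) (nrm (w n) * nrm (w n)) (nrm h).
move=> a b c d. lra.
Qed.

Lemma w_step n : nrm (w n.+2 - w n.+1) <= 2^-1 * nrm (w n.+1 - w n).
Proof.
set a := w n.+1; set b := w n.
have -> : w n.+2 - a = half R *: (a * (a - b) + (a - b) * b).
  rewrite /= -/a -scalerBr; congr (_ *: _).
  by rewrite mulrBr mulrBl addrA subrK opprD addrACA subrr add0r.
rewrite nrm_half.
have h1 := nrmD HA (a * (a - b)) ((a - b) * b).
have h2 := nrmM HA a (a - b).
have h3 := nrmM HA (a - b) b.
have ha := w_bound n.+1; have hb := w_bound n.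
have := nrm_ge0 HA a; have := nrm_ge0 HA b; have := nrm_ge0 HA (a - b).
rewrite -/a -/b in ha hb *.
nra.
Qed.

Lemma w_stepB n : nrm (w n.+1 - w n) <= (2^-1) ^+ n.+2.
Proof.
elim: n => [|n IH].
  rewrite /= mulr0 addr0 subr0 nrm_half expr2.
  have : (2^-1 : R) * 2^-1 = 4^-1 by rewrite -invfM; congr (_^-1); rewrite -natrM.
  move=> ->; move: hn; lra.
apply: (le_trans (w_step n)); rewrite [in X in _ <= X]exprS.
by rewrite ler_pM2l ?invr_gt0 ?ltr0n.
Qed.

Lemma w_cauchy n k : nrm (w (n + k) - w n) <= (2^-1) ^+ n.+1 - (2^-1) ^+ (n + k).+1.
Proof.
elim: k => [|k IH]; first by rewrite addn0 subrr (nrm0 HA) subrr.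
apply: le_trans (nrmB_le HA _ (w (n + k)) _) _.
rewrite addnS; have := w_stepB (n + k).
have e : (2^-1 : R) ^+ (n + k).+2 = 2^-1 * (2^-1) ^+ (n + k).+1 := exprS _ _.
rewrite e; move: IH; set q := (2^-1 : R) ^+ (n + k).+1; set p := (2^-1 : R) ^+ n.+1.
lra.
Qed.

Lemma w_cauchy' m n : (n <= m)%N -> nrm (w m - w n) <= (2^-1) ^+ n.
Proof.
move=> /subnKC <-; apply: (le_trans (w_cauchy n (m - n))).
have h0 : (0 : R) <= (2^-1) ^+ (n + (m - n)).+1 by rewrite exprn_ge0 // invr_ge0 ler0n.
have : (2^-1 : R) ^+ n.+1 <= (2^-1) ^+ n.
  by rewrite exprS ler_piMl ?exprn_ge0 ?invr_ge0 ?ler0n // invf_le1 ?ler1n.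
lra.
Qed.

End Sqrt.

Section Sqrt2.
Variables (R : realType) (A : algType R[i]) (star : A -> A) (nrm : A -> R).
Hypothesis HA : is_unital_Cstar star nrm.
Variable h : A.
Hypothesis hsa : star h = h.
Hypothesis hn : nrm h <= 2^-1.
Local Notation w := (wseq h).

Lemma w_conv : exists l, forall e : R, 0 < e -> exists N, forall n, (N <= n)%N ->
  nrm (w n - l) < e.
Proof.
case: (HA) => _ _ _ comp; apply: comp => e e0.
have [N hN] := geo_small e0.
exists N => m n hm hn'.
have [nm|mn] := leqP n m.
  by apply: le_lt_trans (w_cauchy' HA hn nm) (hN _ hn').
rewrite (nrmBC HA); apply: le_lt_trans (w_cauchy' HA hn (ltnW mn)) (hN _ hm).
Qed.

Lemma w_sa n : star (w n) = w n.
Proof.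
elim: n => [|n IH] /=; first exact: (star0 HA).
by rewrite /half (starZR HA) (starD HA) (starM HA) IH hsa.
Qed.

Lemma sqrt_exists : exists y, star y * y = 1 - h.
Proof.
have [l hl] := w_conv.
have fix1 : l = half R *: (h + l * l).
  apply/eqP; rewrite -subr_eq0; apply/eqP.
  apply: (nrm_small_eq0 HA (K := 4)) => // d d0 d1.
  have [N hN] := hl d d0.
  have hN1 := hN N (leqnn N); have hN2 := hN N.+1 (leqnSn N).
  have -> : l - half R *: (h + l * l) =
     (l - w N.+1) + half R *: (w N * (w N - l) + (w N - l) * l).
    rewrite /= -addrA; congr (_ + _).
    rewrite -!scalerN -scalerDr; congr (_ *: _).
    have ex : w N * (w N - l) + (w N - l) * l = w N * w N - l * l.
      by rewrite mulrBr mulrBl addrA subrK.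
    rewrite ex !opprD -addrA; congr (_ + _).
    by rewrite addrA addNr add0r.
  have e1 := nrmD HA (l - w N.+1) (half R *: (w N * (w N - l) + (w N - l) * l)).
  rewrite (nrm_half HA) in e1.
  have e2 := nrmD HA (w N * (w N - l)) ((w N - l) * l).
  have e3 := nrmM HA (w N) (w N - l).
  have e4 := nrmM HA (w N - l) l.
  have e5 := nrmB_le HA l (w N) 0; rewrite !subr0 in e5.
  have e6 := w_bound HA hn N.
  rewrite (nrmBC HA l) in e5; rewrite (nrmBC HA l) in e1.
  have g1 := nrm_ge0 HA (w N); have g2 := nrm_ge0 HA (w N - l); have g3 := nrm_ge0 HA l.
  have p1 : nrm (w N) * nrm (w N - l) <= 2^-1 * d by apply: ler_pM => //; apply: ltW.
  have p2 : nrm (w N - l) * nrm l <= d * (d + 2^-1).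
    apply: ler_pM => //; first exact: ltW.
    by apply: (le_trans e5); apply: lerD => //; apply: ltW.
  have p3 : d * (d + 2^-1) <= d * (1 + 2^-1) by rewrite ler_pM2l // lerD2r.
  move: e1 e2 e3 e4 p1 p2 p3 hN1 hN2 d0 d1.
  move: (nrm (l - w N.+1 + half R *: (w N * (w N - l) + (w N - l) * l))).
  move: (nrm (w N * (w N - l) + (w N - l) * l)) (nrm (w N * (w N - l))) ((nrm ((w N - l) * l))).
  move: (nrm (w N)) (nrm (w N - l)) (nrm l) (nrm (w N.+1 - l)).
  move=> a1 a2 a3 a4 a5 a6 a7 a8; lra.
have sa : star l = l.
  apply/eqP; rewrite -subr_eq0; apply/eqP.
  apply: (nrm_small_eq0 HA (K := 2)) => // d d0 d1.
  have [N hN] := hl d d0; have hN1 := hN N (leqnn N).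
  have -> : star l - l = star (l - w N) + (w N - l).
    by rewrite (starB HA) w_sa addrA subrK.
  apply: le_trans (nrmD HA _ _) _.
  rewrite (nrm_star HA) (nrmBC HA l); move: hN1; lra.
exists (1 - l).
rewrite (starB HA) (star1 HA) sa.
have ll : l + l = h + l * l.
  have : (1 + 1) *: l = h + l * l by rewrite {1}fix1 scalerA two_half scale1r.
  by rewrite scalerDl scale1r.
have e : l * l = l + l - h by rewrite ll addrAC subrr add0r.
rewrite mulrBr mulr1 !mulrBl !mul1r e opprB.
by rewrite (addrAC l) addrK addrA subrK.
Qed.

End Sqrt2.

Section States.
Variables (R : realType) (A : algType R[i]) (star : A -> A) (nrm : A -> R).
Hypothesis HA : is_unital_Cstar star nrm.
Local Open Scope complex_scope.

Section OneState.
Variable tau : A -> R[i].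
Hypothesis Ht : tracial_state star tau.

Lemma tauD x y : tau (x + y) = tau x + tau y. Proof. by case: Ht => h _ _ _ _; apply: h. Qed.
Lemma tauZ c x : tau (c *: x) = c * tau x. Proof. by case: Ht => _ h _ _ _; apply: h. Qed.
Lemma tau_pos x : 0 <= tau (star x * x). Proof. by case: Ht => _ _ h _ _; apply: h. Qed.
Lemma tau1 : tau 1 = 1. Proof. by case: Ht. Qed.
Lemma tauC x y : tau (x * y) = tau (y * x). Proof. by case: Ht => _ _ _ _ h; apply: h. Qed.

Lemma tau0 : tau 0 = 0.
Proof. by rewrite -(scale0r (0 : A)) tauZ mul0r. Qed.
Lemma tauN x : tau (- x) = - tau x.
Proof. by rewrite -scaleN1r tauZ mulN1r. Qed.
Lemma tauB x y : tau (x - y) = tau x - tau y.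
Proof. by rewrite tauD tauN. Qed.
Lemma tau_sum (I : Type) (s : seq I) (F : I -> A) :
  tau (\sum_(i <- s) F i) = \sum_(i <- s) tau (F i).
Proof.
elim: s => [|a s IH]; first by rewrite !big_nil tau0.
by rewrite !big_cons tauD IH.
Qed.

Lemma ReD (z1 z2 : R[i]) : complex.Re (z1 + z2) = complex.Re z1 + complex.Re z2.
Proof. by case: z1; case: z2. Qed.
Lemma ImD (z1 z2 : R[i]) : complex.Im (z1 + z2) = complex.Im z1 + complex.Im z2.
Proof. by case: z1; case: z2. Qed.
Lemma ReMR (t : R) (z : R[i]) : complex.Re (t%:C * z) = t * complex.Re z.
Proof. case: z => a b /=. ring. Qed.
Lemma ImMR (t : R) (z : R[i]) : complex.Im (t%:C * z) = t * complex.Im z.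
Proof. case: z => a b /=. ring. Qed.

Lemma tau_pos' x : complex.Im (tau (star x * x)) = 0 /\ 0 <= complex.Re (tau (star x * x)).
Proof.
have := tau_pos x; rewrite lecE => /andP[/eqP h1 h2]; split => //.
Qed.

Lemma sa_small x : star x = x -> nrm x <= 2^-1 ->
  complex.Im (tau x) = 0 /\ complex.Re (tau x) <= 1.
Proof.
move=> sx nx; have [y hy] := sqrt_exists HA sx nx.
have := tau_pos y; rewrite hy tauB tau1 lecE => /andP[/eqP h1 h2].
move: h1 h2; case: (tau x) => a b /=; move=> h1 h2; split; move: h1 h2; lra.
Qed.

Definition Bnd (x : A) : R := 2 * nrm x + 1.

Lemma sa_bound x : star x = x ->
  complex.Im (tau x) = 0 /\ `|complex.Re (tau x)| <= Bnd x.
Proof.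
move=> sx.
have B0 : 0 < Bnd x by rewrite /Bnd; have := nrm_ge0 HA x; lra.
set t := (Bnd x)^-1.
have t0 : 0 < t by rewrite invr_gt0.
have tn : t * nrm x <= 2^-1.
  rewrite /t mulrC ler_pdivrMr //; rewrite /Bnd; have := nrm_ge0 HA x; lra.
have sy : star (t%:C *: x) = t%:C *: x by rewrite (starZR HA) sx.
have ny : nrm (t%:C *: x) <= 2^-1 by rewrite (nrmZR HA) ger0_norm // ltW.
have sy' : star ((- t)%:C *: x) = (- t)%:C *: x by rewrite (starZR HA) sx.
have ny' : nrm ((-t)%:C *: x) <= 2^-1 by rewrite (nrmZR HA) normrN ger0_norm // ltW.
have [i1 r1] := sa_small sy ny; have [i2 r2] := sa_small sy' ny'.
rewrite tauZ ReMR ImMR in i1 r1; rewrite tauZ ReMR in r2.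
split; first by move: i1 => /eqP; rewrite mulf_eq0 gt_eqF //= => /eqP.
have e : t * Bnd x = 1 by rewrite mulVf // gt_eqF.
clear -r1 r2 e t0; move: r1 r2 e t0; move: (complex.Re (tau x)) t (Bnd x) => r u b r1 r2 e u0.
rewrite ler_norml; apply/andP; split; nra.
Qed.

Lemma sa_antiRe d : star d = - d -> complex.Re (tau d) = 0.
Proof.
move=> sd.
set b := (- 'i) *: d.
have sb : star b = b.
  rewrite /b (starZ HA) sd scalerN -scaleNr; congr (_ *: _).
  by apply/eqP; rewrite eq_complex /=; apply/andP; split; apply/eqP; ring.
have [ib _] := sa_bound sb.
have -> : d = 'i *: b.
  rewrite /b scalerA.
  have -> : ('i * - 'i : R[i]) = 1.
    by apply/eqP; rewrite eq_complex /=; apply/andP; split; apply/eqP; ring.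
  by rewrite scale1r.
rewrite tauZ; move: ib; case: (tau b) => p q /= ->; ring.
Qed.

Lemma Re_bound x : `|complex.Re (tau x)| <= Bnd (half R *: (x + star x)).
Proof.
set a := half R *: (x + star x).
have sa : star a = a by rewrite /a /half (starZR HA) (starD HA) (starK HA) addrC.
have sd : star (x - a) = - (x - a).
  have aa : a + a = x + star x.
    by rewrite /a -scalerDl half_half scale1r.
  rewrite (starB HA) sa opprB; apply/eqP; rewrite subr_eq.
  by rewrite addrAC aa addrAC subrr add0r.
have [_ hb] := sa_bound sa.
have := sa_antiRe sd; rewrite tauB.
move: hb; case: (tau x) => p q; case: (tau a) => p' q' /=.
move=> hb e; have -> : p = p' by move: e; lra. done.
Qed.

End OneState.
End States.

Section Groups.
Variables (G : Type) (mul : G -> G -> G) (one : G) (inv : G -> G).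
Hypothesis HG : group_axioms mul one inv.

Lemma gA x y z : mul x (mul y z) = mul (mul x y) z. Proof. by case: HG => h _ _ _ _; apply: h. Qed.
Lemma g1m x : mul one x = x. Proof. by case: HG => _ h _ _ _; apply: h. Qed.
Lemma gm1 x : mul x one = x. Proof. by case: HG => _ _ h _ _; apply: h. Qed.
Lemma gVm x : mul (inv x) x = one. Proof. by case: HG => _ _ _ h _; apply: h. Qed.
Lemma gmV x : mul x (inv x) = one. Proof. by case: HG => _ _ _ _ h; apply: h. Qed.

Lemma inv_uniq a b : mul a b = one -> inv b = a.
Proof. by move=> e; rewrite -[inv b]g1m -e -gA gmV gm1. Qed.

Lemma inv_mulVg k g : inv (mul (inv k) g) = mul (inv g) k.
Proof. by apply: inv_uniq; rewrite gA -(gA (inv g)) gmV gm1 gVm. Qed.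

Lemma invK g : inv (inv g) = g.
Proof. by apply: inv_uniq; rewrite gmV. Qed.

Lemma mul_inv_cancel g h : mul g (mul (inv g) h) = h.
Proof. by rewrite gA gmV g1m. Qed.
Lemma mul_cancel_inv g h : mul (inv g) (mul g h) = h.
Proof. by rewrite gA gVm g1m. Qed.

End Groups.

Lemma bounded_scale (R : realType) (G : Type) (c : R) (f : G -> R) :
  Defs.bounded_fun f -> Defs.bounded_fun (fun x => c * f x).
Proof.
case=> M hM; exists (`|c| * M) => x; rewrite normrM; apply: ler_wpM2l => //.
Qed.

Lemma bounded_add (R : realType) (G : Type) (f g : G -> R) :
  Defs.bounded_fun f -> Defs.bounded_fun g -> Defs.bounded_fun (f \+ g).
Proof.
case=> M hM [N hN]; exists (M + N) => x /=.
by apply: le_trans (ler_normD _ _) _; apply: lerD.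
Qed.

Lemma bounded_cst (R : realType) (G : Type) (c : R) : Defs.bounded_fun (fun _ : G => c).
Proof. by exists `|c|. Qed.

Lemma mean0 (R : realType) (G : Type) (m : (G -> R) -> R) :
  (forall (c : R) f, Defs.bounded_fun f -> m (fun x => c * f x) = c * m f) ->
  m (fun _ => 0) = 0.
Proof.
move=> hZ; have := hZ 0 _ (bounded_cst G 1).
have -> : (fun x : G => 0 * (fun=> 1 : R) x) = (fun _ => 0) by apply: funext => x; rewrite mul0r.
by rewrite mul0r.
Qed.

Ltac cplx := apply/eqP; rewrite eq_complex /=; apply/andP; split; apply/eqP; ring.

Lemma mean_lin2 (R : realType) (G : Type) (m : (G -> R) -> R) :
  (forall f g, Defs.bounded_fun f -> Defs.bounded_fun g -> m (f \+ g) = m f + m g) ->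
  (forall (c : R) f, Defs.bounded_fun f -> m (fun x => c * f x) = c * m f) ->
  forall a b f h, Defs.bounded_fun f -> Defs.bounded_fun h ->
  m (fun g => a * f g + b * h g) = a * m f + b * m h.
Proof.
move=> mD mZ a b f h bf bh.
have := mD _ _ (bounded_scale a bf) (bounded_scale b bh).
by rewrite mZ // mZ // => <-.
Qed.

Section Forward.
Variables (R : realType) (G : choiceType) (mul : G -> G -> G) (one : G) (inv : G -> G).
Hypothesis HG : group_axioms mul one inv.
Variables (A : algType R[i]) (star : A -> A) (nrm : A -> R).
Hypothesis HA : is_unital_Cstar star nrm.
Variable alpha : G -> A -> A.
Hypothesis Hal : is_action mul one star alpha.
Local Open Scope complex_scope.

Lemma alD g x y : alpha g (x + y) = alpha g x + alpha g y.
Proof. by case: Hal => [[h _] _ _ _ _]; apply: h. Qed.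
Lemma alZ g c x : alpha g (c *: x) = c *: alpha g x.
Proof. by case: Hal => [[_ h] _ _ _ _]; apply: h. Qed.
Lemma alM g x y : alpha g (x * y) = alpha g x * alpha g y.
Proof. by case: Hal => [_ h _ _ _]; apply: h. Qed.
Lemma al1 g : alpha g 1 = 1.
Proof. by case: Hal => [_ _ h _ _]; apply: h. Qed.
Lemma alS g x : alpha g (star x) = star (alpha g x).
Proof. by case: Hal => [_ _ _ h _]; apply: h. Qed.
Lemma al_one x : alpha one x = x.
Proof. by case: Hal => [_ _ _ _ [h _]]; apply: h. Qed.
Lemma al_mul g h x : alpha (mul g h) x = alpha g (alpha h x).
Proof. by case: Hal => [_ _ _ _ [_ e]]; apply: e. Qed.
Lemma al0 g : alpha g 0 = 0.
Proof. by have := alZ g 0 0; rewrite !scale0r. Qed.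
Lemma alN g x : alpha g (- x) = - alpha g x.
Proof. by rewrite -scaleN1r alZ scaleN1r. Qed.
Lemma alB g x y : alpha g (x - y) = alpha g x - alpha g y.
Proof. by rewrite alD alN. Qed.
Lemma al_sum g (I : Type) (s : seq I) (F : I -> A) :
  alpha g (\sum_(i <- s) F i) = \sum_(i <- s) alpha g (F i).
Proof.
elim: s => [|a s IH]; first by rewrite !big_nil al0.
by rewrite !big_cons alD IH.
Qed.

Lemma state_comp tau g : tracial_state star tau ->
  tracial_state star (fun x => tau (alpha g x)).
Proof.
move=> Ht; split.
- by move=> x y; rewrite alD (tauD Ht).
- by move=> c x; rewrite alZ (tauZ Ht).
- by move=> x; rewrite alM alS (tau_pos Ht).
- by rewrite al1 (tau1 Ht).
- by move=> x y; rewrite !alM (tauC Ht).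
Qed.

Variable tau : A -> R[i].
Hypothesis Ht : tracial_state star tau.

Definition Ff x g := complex.Re (tau (alpha (inv g) x)).
Definition Gf x g := complex.Im (tau (alpha (inv g) x)).

Lemma Ff_bounded x : Defs.bounded_fun (Ff x).
Proof.
exists (Bnd nrm (half R *: (x + star x))) => g.
rewrite /Ff; exact: (Re_bound HA (state_comp (inv g) Ht)).
Qed.

Lemma Gf_eq x : Gf x = Ff ((- 'i) *: x).
Proof.
apply: funext => g; rewrite /Gf /Ff alZ (tauZ Ht).
by case: (tau _) => a b /=; ring.
Qed.

Lemma Gf_bounded x : Defs.bounded_fun (Gf x).
Proof. by rewrite Gf_eq; apply: Ff_bounded. Qed.

Lemma FfD x y : Ff (x + y) = Ff x \+ Ff y.
Proof. by apply: funext => g; rewrite /Ff /= alD (tauD Ht) ReD. Qed.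
Lemma GfD x y : Gf (x + y) = Gf x \+ Gf y.
Proof. by apply: funext => g; rewrite /Gf /= alD (tauD Ht) ImD. Qed.
Lemma FfZ c x : Ff (c *: x) = fun g => complex.Re c * Ff x g + (- complex.Im c) * Gf x g.
Proof.
apply: funext => g; rewrite /Ff /Gf alZ (tauZ Ht).
by case: c => a b; case: (tau _) => p q /=; ring.
Qed.
Lemma GfZ c x : Gf (c *: x) = fun g => complex.Im c * Ff x g + complex.Re c * Gf x g.
Proof.
apply: funext => g; rewrite /Ff /Gf alZ (tauZ Ht).
by case: c => a b; case: (tau _) => p q /=; ring.
Qed.

Lemma forward : amenable_group R mul inv -> invariant_tracial_state star alpha.
Proof.
case=> m [mD mZ mP m1 mI].
have m0 := mean0 mZ.
have ml := mean_lin2 mD mZ.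
exists (fun x => (m (Ff x))%:C + 'i * (m (Gf x))%:C); split; first split.
- move=> x y; rewrite FfD GfD !mD; try exact: Ff_bounded; try exact: Gf_bounded.
  cplx.
- move=> c x; rewrite FfZ GfZ !ml; try exact: Ff_bounded; try exact: Gf_bounded.
  by case: c => a b; cplx.
- move=> x.
  have -> : Gf (star x * x) = fun _ => 0.
    apply: funext => g; rewrite /Gf alM alS.
    by case: (tau_pos' Ht (alpha (inv g) x)).
  rewrite m0 lecE /= !mulr0 !addr0 subr0 addr0 eqxx /=.
  apply: mP; first exact: Ff_bounded.
  by move=> g; rewrite /Ff alM alS; case: (tau_pos' Ht (alpha (inv g) x)).
- have -> : Ff 1 = fun _ => 1.
    by apply: funext => g; rewrite /Ff al1 (tau1 Ht).
  have -> : Gf 1 = fun _ => 0.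
    by apply: funext => g; rewrite /Gf al1 (tau1 Ht).
  rewrite m1 m0; cplx.
- move=> x y.
  have -> : Ff (x * y) = Ff (y * x) by apply: funext => g; rewrite /Ff !alM (tauC Ht).
  have -> : Gf (x * y) = Gf (y * x) by apply: funext => g; rewrite /Gf !alM (tauC Ht).
  by [].
- move=> k x.
  have -> : Ff (alpha k x) = fun h => Ff x (mul (inv k) h).
    by apply: funext => g; rewrite /Ff -al_mul (inv_mulVg HG).
  have -> : Gf (alpha k x) = fun h => Gf x (mul (inv k) h).
    by apply: funext => g; rewrite /Gf -al_mul (inv_mulVg HG).
  rewrite !mI //; [exact: Gf_bounded | exact: Ff_bounded].
Qed.

End Forward.

Section SupBound.
Variables (R : realType) (A : algType R[i]) (star : A -> A) (nrm : A -> R).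
Hypothesis HA : is_unital_Cstar star nrm.
Local Open Scope classical_set_scope.

Lemma le_sup2u y sigma : tracial_state star sigma ->
  Num.sqrt (complex.Re (sigma y)) <= sup2u star y.
Proof.
move=> Hs; apply: ub_le_sup; last by exists sigma.
exists (Num.sqrt (Bnd nrm (half R *: (y + star y)))) => _ [s Hs' <-].
apply: ler_wsqrtr; apply: le_trans (Re_bound HA Hs' y); exact: ler_norm.
Qed.

Lemma small_of_sup y sigma (e : R) : tracial_state star sigma ->
  sup2u star y < e -> 0 <= complex.Re (sigma y) -> complex.Re (sigma y) < e ^+ 2.
Proof.
move=> Hs hy h0.
have h1 := le_sup2u y Hs.
have h2 := sqrtr_ge0 (complex.Re (sigma y)).
rewrite -(sqr_sqrtr h0).
have h3 : Num.sqrt (complex.Re (sigma y)) < e by apply: le_lt_trans hy.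
rewrite !expr2; apply: (le_lt_trans (y := Num.sqrt (complex.Re (sigma y)) * e)).
  by apply: ler_wpM2l => //; apply: ltW.
by rewrite ltr_pM2r // (le_lt_trans h2 h3).
Qed.

End SupBound.

Section QLemmas.
Variables (R : realType) (A : algType R[i]) (star : A -> A) (nrm : A -> R).
Hypothesis HA : is_unital_Cstar star nrm.
Variable tau : A -> R[i].
Hypothesis Ht : tracial_state star tau.
Local Open Scope complex_scope.

Definition Qf x := complex.Re (tau (star x * x)).
Definition Tf u v := complex.Re (tau (star u * v + star v * u)).

Lemma Q_ge0 x : 0 <= Qf x. Proof. by case: (tau_pos' Ht x). Qed.
Lemma Q0 : Qf 0 = 0. Proof. by rewrite /Qf (star0 HA) mul0r (tau0 Ht). Qed.

Lemma Q_expand (t : R) u v : Qf (t%:C *: u + v) = t ^+ 2 * Qf u + t * Tf u v + Qf v.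
Proof.
rewrite /Qf /Tf.
have -> : star (t%:C *: u + v) * (t%:C *: u + v) = t%:C *: (t%:C *: (star u * u)) +
   t%:C *: (star u * v) + (t%:C *: (star v * u) + star v * v).
  by rewrite (starD HA) (starZR HA) mulrDl !mulrDr -!scalerAl -!scalerAr.
rewrite !(tauD Ht) !(tauZ Ht) !ReD !ReMR; ring.
Qed.

Lemma QN u : Qf (- u) = Qf u.
Proof. by rewrite /Qf (starN HA) mulrNN. Qed.

Lemma Q_par u v : Qf (u + v) + Qf (- u + v) = 2 * Qf u + 2 * Qf v.
Proof.
have e : (-1 : R[i]) = (-1 : R)%:C by apply/eqP; rewrite eq_complex /= oppr0 !eqxx.
have h1 := Q_expand 1 u v; have h2 := Q_expand (-1) u v.
rewrite -[(1:R)%:C]/(1 : R[i]) scale1r in h1.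
rewrite -e scaleN1r in h2.
rewrite h1 h2; ring.
Qed.

Lemma Q_add_le u v : Qf (u + v) <= 2 * Qf u + 2 * Qf v.
Proof. have := Q_par u v; have := Q_ge0 (- u + v); lra. Qed.

Lemma T_bound u v (s : R) : 0 < s -> s * `|Tf u v| <= s ^+ 2 * Qf u + Qf v.
Proof.
move=> s0; have h1 := Q_expand s u v; have h2 := Q_expand (- s) u v.
have g1 := Q_ge0 (s%:C *: u + v); have g2 := Q_ge0 ((- s)%:C *: u + v).
rewrite h1 in g1; rewrite h2 sqrrN in g2.
rewrite -{1}(ger0_norm (ltW s0)) -normrM ler_norml.
move: g1 g2; move: (Tf u v) (Qf u) (Qf v) (s ^+ 2) => a b c d g1 g2.
apply/andP; split; lra.
Qed.

Lemma T_diff u v : Tf (u - v) (u + v) = 2 * (Qf u - Qf v).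
Proof.
have ex : star (u - v) * (u + v) + star (u + v) * (u - v) =
          (star u * u - star v * v) + (star u * u - star v * v).
  rewrite (starB HA) (starD HA) mulrBl mulrDl !mulrDr !mulrN.
  move: (star u * u) (star u * v) (star v * u) (star v * v) => a b c d.
  rewrite opprD addrACA (addrACA a b) subrr addr0.
  by rewrite (addrACA (- c)) addNr add0r addrACA.
rewrite /Tf ex (tauD Ht) ReD (tauB Ht) ReD.
have -> : complex.Re (- tau (star v * v)) = - Qf v by rewrite /Qf; case: (tau (star v * v)).

rewrite /Qf; ring.
Qed.

End QLemmas.

Lemma Re_sum (R : realType) (I : Type) (s : seq I) (F : I -> R[i]) :
  complex.Re (\sum_(i <- s) F i) = \sum_(i <- s) complex.Re (F i).
Proof.
elim: s => [|a s IH]; first by rewrite !big_nil.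
by rewrite !big_cons (ReD (R := R)) IH.
Qed.

Lemma star_sum (R : realType) (A : algType R[i]) (star : A -> A) (nrm : A -> R)
  (HA : is_unital_Cstar star nrm) (I : Type) (s : seq I) (F : I -> A) :
  star (\sum_(i <- s) F i) = \sum_(i <- s) star (F i).
Proof.
elim: s => [|a s IH]; first by rewrite !big_nil (star0 HA).
by rewrite !big_cons (starD HA) IH.
Qed.

Section Reverse1.
Variables (R : realType) (G : choiceType) (mul : G -> G -> G) (one : G) (inv : G -> G).
Hypothesis HG : group_axioms mul one inv.
Variables (A : algType R[i]) (star : A -> A) (nrm : A -> R).
Hypothesis HA : is_unital_Cstar star nrm.
Variable alpha : G -> A -> A.
Hypothesis Hal : is_action mul one star alpha.
Variable tau : A -> R[i].
Hypothesis Ht : tracial_state star tau.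
Hypothesis Hinv : forall g x, tau (alpha g x) = tau x.
Local Open Scope classical_set_scope.

Local Notation Qf := (Qf star tau).

Definition Pxi (xi : G -> A) h := Qf (xi h).
Definition Mxi (xi : G -> A) (f : G -> R) : R := \sum_(h \in [set: G]) (f h * Pxi xi h).

Definition vanish (xi : G -> A) (X : {fset G}) := forall h, h \notin X -> xi h = 0.

Lemma fin_supp xi : compact_supp xi -> exists X, vanish xi X.
Proof.
move=> fin; exists (fset_set [set g | xi g != 0]) => h.
rewrite in_fset_set // mem_setE /= => /negP.
move=> hn; apply/eqP; apply/negPn/negP => nz; apply: hn.
first [by rewrite inE | by rewrite unfold_in | by [] | by apply/mem_set | by rewrite in_setE ].
Qed.

Lemma Mxi_list xi X f : vanish xi X -> Mxi xi f = \sum_(h <- X) f h * Pxi xi h.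
Proof.
move=> hX; rewrite /Mxi (fsbigTE X) // => h /hX.
by rewrite /Pxi => ->; rewrite (Q0 HA Ht) mulr0.
Qed.

Lemma ip_list xi X : vanish xi X -> ip star xi xi = \sum_(h <- X) star (xi h) * xi h.
Proof. by move=> hX; rewrite /ip (fsbigTE X) // => h /hX ->; rewrite mulr0. Qed.

Lemma Re_ip xi X : vanish xi X ->
  complex.Re (tau (ip star xi xi)) = \sum_(h <- X) Pxi xi h.
Proof. by move=> hX; rewrite (ip_list hX) (tau_sum Ht) Re_sum. Qed.

Lemma Re_ip_ge0 xi X : vanish xi X -> 0 <= complex.Re (tau (ip star xi xi)).
Proof. by move=> hX; rewrite (Re_ip hX) sumr_ge0 // => h _; apply: Q_ge0. Qed.

Lemma ip_sa xi X : vanish xi X -> star (ip star xi xi) = ip star xi xi.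
Proof.
move=> hX; rewrite (ip_list hX) (star_sum HA); apply: eq_bigr => h _.
by rewrite (starM HA) (starK HA).
Qed.

Lemma Mxi_add xi X f g : vanish xi X -> Mxi xi (f \+ g) = Mxi xi f + Mxi xi g.
Proof.
move=> hX; rewrite !(Mxi_list _ hX) -big_split; apply: eq_bigr => h _ /=.
by rewrite mulrDl.
Qed.

Lemma Mxi_scale xi X (c : R) f : vanish xi X -> Mxi xi (fun x => c * f x) = c * Mxi xi f.
Proof.
move=> hX; rewrite !(Mxi_list _ hX) mulr_sumr; apply: eq_bigr => h _ /=.
by rewrite mulrA.
Qed.

Lemma Mxi_ge0 xi f : (forall x, 0 <= f x) -> 0 <= Mxi xi f.
Proof. by move=> hf; apply: fsumr_ge0 => h _; rewrite mulr_ge0 // Q_ge0. Qed.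

Lemma Mxi_one xi X : vanish xi X -> Mxi xi (fun _ => 1) = complex.Re (tau (ip star xi xi)).
Proof.
move=> hX; rewrite (Mxi_list _ hX) (Re_ip hX); apply: eq_bigr => h _; by rewrite mul1r.
Qed.

Lemma Mxi_bound xi X f (B : R) : vanish xi X -> (forall x, `|f x| <= B) ->
  `|Mxi xi f| <= B * complex.Re (tau (ip star xi xi)).
Proof.
move=> hX hB; rewrite (Mxi_list _ hX) (Re_ip hX) mulr_sumr.
apply: le_trans (ler_norm_sum _ _ _) _; apply: ler_sum => h _.
rewrite normrM (ger0_norm (Q_ge0 Ht _)); apply: ler_wpM2r => //; exact: Q_ge0.
Qed.


Local Notation talpha := (talpha mul inv alpha).

Lemma talpha_vanish xi X g : vanish xi X ->
  vanish (talpha g xi) (X `|` [fset mul g x | x in X])%fset.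
Proof.
move=> hX h; rewrite in_fsetU negb_or => /andP[_ hn].
rewrite /talpha hX ?(al0 Hal) //; apply: contra hn => hin.
apply/imfsetP; exists (mul (inv g) h) => //.
by rewrite (mul_inv_cancel HG).
Qed.

Lemma vanish_sub xi X Y : vanish xi X -> vanish xi (X `|` Y)%fset.
Proof. by move=> hX h; rewrite in_fsetU negb_or => /andP[hn _]; apply: hX. Qed.

Lemma P_eta xi g h : Pxi (talpha g xi) h = Pxi xi (mul (inv g) h).
Proof.
by rewrite /Pxi /Qf /talpha -(alS Hal) -(alM Hal) Hinv.
Qed.

Lemma Mxi_reindex xi g f :
  Mxi xi f = \sum_(h \in [set: G]) (f (mul (inv g) h) * Pxi (talpha g xi) h).
Proof.
rewrite /Mxi (reindex_fsbigT (mul (inv g))); last first.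
  by exists (mul g) => x; [apply: (mul_inv_cancel HG) | apply: (mul_cancel_inv HG)].
by apply: eq_fsbigr => h _; rewrite P_eta.
Qed.

Lemma inv_est xi X g f (B s : R) : vanish xi X -> 0 < s -> (forall x, `|f x| <= B) ->
  2 * s * `|Mxi xi (fun h => f (mul (inv g) h)) - Mxi xi f| <=
  B * (s ^+ 2 * complex.Re (tau (ip star (fun h => talpha g xi h - xi h)
                                         (fun h => talpha g xi h - xi h)))
       + 4 * complex.Re (tau (ip star xi xi))).
Proof.
move=> hX s0 hB.
have B0 : 0 <= B by apply: le_trans (hB one).
set eta := talpha g xi.
set X' := (X `|` [fset mul g x | x in X])%fset.
have he : vanish eta X' := talpha_vanish (g := g) hX.
have hx : vanish xi X' := vanish_sub (Y := [fset mul g x | x in X]%fset) hX.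
have hu : vanish (fun h => eta h - xi h) X'.
  by move=> h hn; rewrite he // hx // subr0.
have e1 := Mxi_list (fun h => f (mul (inv g) h)) hx.
have e2 : forall f', Mxi xi f' = \sum_(h <- X') f' (mul (inv g) h) * Pxi eta h.
  move=> f'; rewrite (Mxi_reindex _ g) (fsbigTE X') // => h /he.
  by rewrite /Pxi -/eta => ->; rewrite (Q0 HA Ht) mulr0.
have e3 := Re_ip hx.
have e4 : complex.Re (tau (ip star xi xi)) = \sum_(h <- X') Pxi eta h.
  rewrite -(Mxi_one hx) e2; by apply: eq_bigr => h _; rewrite mul1r.
have e5 := Re_ip hu.
rewrite e1 e2 -sumrB e5.
have -> : 4 * complex.Re (tau (ip star xi xi)) =
   2 * \sum_(h <- X') Pxi eta h + 2 * \sum_(h <- X') Pxi xi h.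
  by rewrite -e3 -e4; ring.
rewrite !mulr_sumr -!big_split /= mulr_sumr.
apply: le_trans (_ : _ <= \sum_(h <- X') 2 * s * `|f (mul (inv g) h) * Pxi xi h -
     f (mul (inv g) h) * Pxi eta h|) _.
  rewrite -mulr_sumr; apply: ler_wpM2l; [by rewrite mulr_ge0 // ltW | exact: ler_norm_sum].
apply: ler_sum => h _.
rewrite -mulrBr normrM.
have hT := T_bound HA Ht (eta h - xi h) (eta h + xi h) s0.
rewrite (T_diff HA Ht) normrM (ger0_norm (ler0n _ 2)) in hT.
have hQ := Q_add_le HA Ht (eta h) (xi h).
have hf := hB (mul (inv g) h).
have g1 := normr_ge0 (f (mul (inv g) h)).
have g2 := normr_ge0 (Qf (eta h) - Qf (xi h)).
rewrite /Pxi (distrC (Qf (xi h))).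
move: hT hQ hf g1 g2.
move: (`|Qf (eta h) - Qf (xi h)|) (`|f (mul (inv g) h)|) (Qf (eta h + xi h)) (Qf (eta h - xi h)).
move: (Qf (eta h)) (Qf (xi h)) => a b c d e k hT hQ hf g1 g2.
have : 2 * s * (d * c) <= B * (2 * s * c).
  rewrite (_ : 2 * s * (d * c) = d * (2 * s * c)); last by ring.
  apply: ler_wpM2r => //.
  by rewrite mulr_ge0 // mulr_ge0 // ltW.
move=> h1; apply: (le_trans h1); rewrite ler_wpM2l //; move: hT hQ; lra.
Qed.

End Reverse1.

Section UltraLim.
Local Open Scope classical_set_scope.

Lemma ultra_lim (R : realType) (I : Type) (U : set_system I) (v : I -> R) (b : R) :
  UltraFilter U -> (forall i, `|v i| <= b) -> exists p : R, v @ U --> p.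
Proof.
move=> UU hb.
have FP : ProperFilter (v @ U) by apply: fmap_proper_filter.
have hs0 : U (v @^-1` `[- b, b]).
  apply: filterS (@filterT _ U _) => i _ /=.
  by rewrite in_itv /= -ler_norml.
have hs : (v @ U) `[- b, b] := hs0.
have [p [_ clp]] := segment_compact FP hs.
exists p => N Np.
case: (in_ultra_setVsetC (v @^-1` N) UU) => // hc.
have hF : (v @ U) (~` N) by [].
have [x [hx1 hx2]] := clp _ _ hF Np.
by [].
Qed.

End UltraLim.

Definition epsn (R : realType) (n : nat) : R := (n%:R + 1)^-1.

Lemma epsn_gt0 (R : realType) n : 0 < epsn R n.
Proof. by rewrite /epsn invr_gt0 ltr_wpDl. Qed.

Lemma epsn_le1 (R : realType) n : epsn R n <= 1.
Proof. by rewrite /epsn invf_le1 ?ltr_wpDl // lerDr. Qed.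

Lemma epsn_small (R : realType) (e : R) : 0 < e ->
  exists N, forall n, (N <= n)%N -> epsn R n < e.
Proof.
move=> e0.
have [N hN] : exists N : nat, e^-1 < N%:R.
  exists (Num.bound e^-1); apply: archi_boundP; rewrite invr_ge0 ltW //.
exists N => n hn; rewrite /epsn -[_ < e]ltf_pV2 ?posrE ?invr_gt0 ?ltr_wpDl // invrK.
apply: (lt_le_trans hN); apply: ler_wpDr => //; by rewrite ler_nat.
Qed.

Section Reverse2.
Variables (R : realType) (G : choiceType) (mul : G -> G -> G) (one : G) (inv : G -> G).
Hypothesis HG : group_axioms mul one inv.
Variables (A : algType R[i]) (star : A -> A) (nrm : A -> R).
Hypothesis HA : is_unital_Cstar star nrm.
Variable alpha : G -> A -> A.
Hypothesis Hal : is_action mul one star alpha.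
Variable tau : A -> R[i].
Hypothesis Ht : tracial_state star tau.
Hypothesis Hinv : forall g x, tau (alpha g x) = tau x.
Local Open Scope classical_set_scope.
Local Notation Qf := (Qf star tau).
Local Notation Tf := (Tf star tau).

Lemma N_close (xi : G -> A) (X : {fset G}) (e : R) : vanish xi X -> 0 < e -> norm2u star (ip star xi xi - 1) < e ->
  `|complex.Re (tau (ip star xi xi)) - 1| < e.
Proof.
move=> hX e0 hn.
set d := ip star xi xi - 1.
have sd : star d = d by rewrite /d (starB HA) (star1 HA) (ip_sa HA hX).
have qd : Qf d < e ^+ 2 := small_of_sup HA Ht hn (Q_ge0 Ht d).
set s := e^-1.
have s0 : 0 < s by rewrite invr_gt0.
have hT := T_bound HA Ht d 1 s0.
have q1 : Qf 1 = 1 by rewrite /Qf (star1 HA) mulr1 (tau1 Ht).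
have t1 : Tf d 1 = 2 * (complex.Re (tau (ip star xi xi)) - 1).
  rewrite /Tf sd (star1 HA) mulr1 mul1r (tauD Ht) ReD /d (tauB Ht) (tau1 Ht).
  by case: (tau _) => p q /=; ring.
rewrite q1 t1 normrM (ger0_norm (ler0n _ 2)) in hT.
have se : s * e = 1 by rewrite mulVf // gt_eqF.
have hq : s ^+ 2 * Qf d < 1.
  by rewrite -(expr1n _ 2) -se exprMn ltr_pM2l ?exprn_gt0.
move: hT hq se s0 e0; move: (`|complex.Re (tau (ip star xi xi)) - 1|) (s ^+ 2 * Qf d) => x y.
move=> hT hq se s0 e0.
have : s * x < s * e by rewrite se; lra.
by rewrite ltr_pM2l.
Qed.

Lemma D_small (u : G -> A) (X : {fset G}) (e : R) : vanish u X -> norm2u_ell2 star u < e ->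
  complex.Re (tau (ip star u u)) < e ^+ 2.
Proof.
move=> hX hn; apply: (small_of_sup HA Ht hn).
exact: (Re_ip_ge0 Ht hX).
Qed.


Hypothesis Htam : tracially_amenable mul inv star nrm alpha.
Local Notation talpha := (talpha mul inv alpha).

Lemma reverse : amenable_group R mul inv.
Proof.
pose I := (seq G * nat)%type.
have hgood : forall i : I, exists xi, [/\ compact_supp xi,
     norm2u star (ip star xi xi - 1) < epsn R i.2 &
     forall g, g \in i.1 -> norm2u_ell2 star (fun h => talpha g xi h - xi h) < epsn R i.2].
  move=> i; have [xi [c1 _ _ c4 c5]] := Htam [::] i.1 (epsn_gt0 R i.2).
  by exists xi; split.
have [xs hxs] := choice hgood.
have hX : forall i, exists X, vanish (xs i) X.
  by move=> i; case: (hxs i) => c1 _ _; apply: fin_supp.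
have [Xs hXs] := choice hX.
pose v (f : G -> R) (i : I) := Mxi star tau (xs i) f.
pose Nn (i : I) := complex.Re (tau (ip star (xs i) (xs i))).
have hN : forall i, `|Nn i - 1| < epsn R i.2.
  move=> i; case: (hxs i) => _ c4 _.
  exact: (N_close (hXs i) (epsn_gt0 R i.2) c4).
have hN2 : forall i, Nn i <= 2.
  move=> i; have := hN i; have := epsn_le1 R i.2; rewrite ltr_norml.
  move=> h1 /andP[_ h2]; lra.
have vb : forall f B, (forall x, `|f x| <= B) -> forall i, `|v f i| <= 2 * B.
  move=> f B hB i; have B0 : 0 <= B by apply: le_trans (hB one).
  apply: le_trans (Mxi_bound HA Ht (hXs i) hB) _.
  by rewrite (mulrC 2); apply: ler_wpM2l => //; exact: (hN2 i).
pose Bs (j : I) := [set i : I | {subset j.1 <= i.1} /\ (j.2 <= i.2)%N].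
have F0F : Filter (filter_from [set: I] Bs).
  apply: filter_from_filter; first by exists ([::], 0%N).
  move=> j1 j2 _ _; exists (j1.1 ++ j2.1, maxn j1.2 j2.2) => //.
  move=> i [hs hn]; split; split.
  - by move=> x hx; apply: hs; rewrite mem_cat hx.
  - by apply: leq_trans hn; rewrite leq_maxl.
  - by move=> x hx; apply: hs; rewrite mem_cat hx orbT.
  - by apply: leq_trans hn; rewrite leq_maxr.
have F0P : ProperFilter (filter_from [set: I] Bs).
  apply: filter_from_proper => j _; exists j; split => //.
have [U [UU F0U]] := ultraFilterLemma F0P.
have UP : ProperFilter U by case: UU.
have UB : forall j, U (Bs j) by move=> j; apply: F0U; exists j.
pose m (f : G -> R) := lim (v f @ U).
have mcv : forall f, Defs.bounded_fun f -> v f @ U --> m f.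
  move=> f [B hB]; have [p hp] := ultra_lim UU (vb f B hB).
  by rewrite /m (cvg_lim (@Rhausdorff R) hp).
have uniq : forall (w : I -> R) (a b : R), w @ U --> a -> w @ U --> b -> a = b.
  by move=> w a b ha hb; rewrite -(cvg_lim (@Rhausdorff R) ha) -(cvg_lim (@Rhausdorff R) hb).
exists m; split.
- move=> f g bf bg; apply: (uniq (v (f \+ g))); first exact: mcv (bounded_add bf bg).
  have -> : v (f \+ g) = v f + v g.
    by apply: funext => i; rewrite /v (Mxi_add HA Ht _ _ (hXs i)).
  exact: cvgD (mcv f bf) (mcv g bg).
- move=> c f bf; apply: (uniq (v (fun x => c * f x))); first exact: mcv (bounded_scale c bf).
  have -> : v (fun x => c * f x) = (fun _ => c) * v f.
    by apply: funext => i; rewrite /v (Mxi_scale HA Ht _ _ (hXs i)).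
  exact: cvgM (cvg_cst c) (mcv f bf).
- move=> f bf hf; apply: (closed_cvg (fun x : R => 0 <= x)) (mcv f bf).
    exact: closed_ge.
  by apply: filterS (@filterT _ U _) => i _ /=; apply: Mxi_ge0.
- apply: (uniq (v (fun _ => 1))); first exact: mcv (bounded_cst G 1).
  apply/cvgrPdist_lt => e e0.
  have [N hNe] := epsn_small e0.
  apply: filterS (UB ([::], N)) => i [_ hn] /=.
  rewrite /v (Mxi_one HA Ht (hXs i)) distrC.
  exact: lt_trans (hN i) (hNe _ hn).
- move=> f g [B hB].
  have B0 : 0 <= B by apply: le_trans (hB one).
  have bL : Defs.bounded_fun (fun h => f (mul (inv g) h)) by exists B.
  pose w i := v (fun h => f (mul (inv g) h)) i - v f i.
  have w0 : w @ U --> 0.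
    apply/cvgrPdist_lt => e e0.
    have e1 : 0 < e / (9 * B + 1) by rewrite divr_gt0 // ltr_wpDl // mulr_ge0.
    have [N hNe] := epsn_small e1.
    apply: filterS (UB ([:: g], N)) => i [hs hn] /=.
    have gi : g \in i.1 by apply: hs; rewrite inE.
    case: (hxs i) => _ _ c5.
    have hu : vanish (fun h => talpha g (xs i) h - xs i h)
        (Xs i `|` [fset mul g x | x in Xs i])%fset.
      move=> h hh; rewrite (talpha_vanish HG Hal (hXs i) hh).
      by rewrite (vanish_sub (hXs i) hh) subr0.
    have hD := D_small hu (c5 g gi).
    set ep := epsn R i.2.
    have ep0 : 0 < ep := epsn_gt0 R i.2.
    set s := ep^-1.
    have s0 : 0 < s by rewrite invr_gt0.
    have hI := inv_est HG HA Hal Ht Hinv g (hXs i) s0 hB.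
    have se : s * ep = 1 by rewrite mulVf // gt_eqF.
    have hq : s ^+ 2 * complex.Re (tau (ip star (fun h => talpha g (xs i) h - xs i h)
                                       (fun h => talpha g (xs i) h - xs i h))) <= 1.
      rewrite -(expr1n _ 2) -se exprMn ler_wpM2l ?exprn_ge0 ?ltW //.
    have hN2i := hN2 i.
    have hNn0 : 0 <= Nn i by apply: (Re_ip_ge0 Ht (hXs i)).
    rewrite sub0r normrN.
    have hw : 2 * `|w i| <= 9 * B * ep.
      rewrite -/(Nn i) in hI.
      move: hI hq hN2i hNn0; rewrite -/(v _ i) -/(v f i) -/(w i).
      move: (`|w i|) (s ^+ 2 * complex.Re _) (Nn i) => x y z hI hq hN2i hNn0.
      have hx : 2 * s * x <= 9 * B.
        have h9 : y + 4 * z <= 9 by lra.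
        apply: le_trans hI _; rewrite (mulrC 9); exact: ler_wpM2l.
      have : 2 * s * x * ep <= 9 * B * ep by rewrite ler_wpM2r // ltW.
      have -> : 2 * s * x * ep = 2 * x by rewrite -[RHS]mulr1 -se; ring.
      done.
    have hep : (9 * B + 1) * ep < e.
      by rewrite mulrC -ltr_pdivlMr ?ltr_wpDl ?mulr_ge0 // hNe.
    have := normr_ge0 (w i).
    move: hw hep ep0 B0; move: (`|w i|) => x; nra.
  have -> : m (fun h => f (mul (inv g) h)) = 0 + m f.
    apply: (uniq (v (fun h => f (mul (inv g) h)))); first exact: mcv bL.
    have -> : v (fun h => f (mul (inv g) h)) = w + v f.
      by apply: funext => i; rewrite /w /= subrK.
    exact: cvgD w0 (mcv f (ex_intro _ B hB)).
  by rewrite add0r.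
Qed.

End Reverse2.

Unset Implicit Arguments.

Theorem lemma2p9 (R : realType) (G : choiceType) (mul : G -> G -> G) (one : G)
  (inv : G -> G) (HG : group_axioms mul one inv)
  (A : algType R[i]) (star : A -> A) (nrm : A -> R)
  (HA : is_unital_Cstar star nrm)
  (alpha : G -> A -> A) (Halpha : is_action mul one star alpha)
  (Htam : tracially_amenable mul inv star nrm alpha)
  (HT : exists tau : A -> R[i], tracial_state star tau) :
  amenable_group R mul inv <-> invariant_tracial_state star alpha.
Proof.
have [tau Ht] := HT.
split.
- exact: (forward HG HA Halpha Ht).
- case=> tau' [Ht' Hinv].
  exact: (reverse HG HA Halpha Ht' Hinv Htam).
Qed.
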